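(* Suppose units arrive in $K$ sequential groups of sizes $n_1,\dots,n_K$ (each even) with $n_{tk}=n_{ck}=n_k/2$ for $k=1,\dots,K$, and the assignment $W=(W_{[1]},\dots,W_{[K]})$ is generated by sequential pair-switching rerandomization (SeqPSRR), assumed to terminate almost surely in every group. Then the difference-in-means estimator $\widehat\tau=\frac{2}{n}\sum_{i=1}^nW_iY_i(1)-\frac2n\sum_{i=1}^n(1-W_i)Y_i(0)$, $n=\sum_kn_k$, satisfies $E(\widehat\tau)=\tau=n^{-1}\sum_{i=1}^n\{Y_i(1)-Y_i(0)\}$.
   Context: Units are indexed so that group $k$ consists of units $n_{1:(k-1)}+1,\dots,n_{1:k}$, where $n_{1:k}=\sum_{l\le k}n_l$; $W_{[k]}$ is the assignment sub-vector of group $k$, with $n_{tk}$ treated and $n_{ck}$ controls. Covariates $X_i\in\mathbb R^p$ are fixed; $S_{XX[k]}$ is the (assumed invertible) sample covariance of the covariates of the first $k$ groups. With earlier groups' assignments fixed, the cumulative Mahalanobis distance of a group-$k$ assignment is $M_k(W_{[k]})=n_{t,1:k}(1-n_{t,1:k}/n_{1:k})(\overline X_{t[1:k]}-\overline X_{c[1:k]})^{\mathrm T}S_{XX[k]}^{-1}(\overline X_{t[1:k]}-\overline X_{c[1:k]})$, where $n_{t,1:k}=\sum_{l\le k}n_{tl}$ and $\overline X_{t[1:k]}$, $\overline X_{c[1:k]}$ are covariate means of treated/control units among the first $k$ groups. SeqPSRR (inputs: positive numbers $s_1,\dots,s_K$, tuning parameter $\gamma\ge0$): set $M_{[0]}=0$;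 for $k=1,\dots,K$: set $a_k=n_k(n_{1:k})^{-1}q_k$, where $q_k$ is the lower $1/s_k$ quantile of a noncentral chi-square distribution with $p$ degrees of freedom and noncentrality parameter $n_{1:(k-1)}n_k^{-1}M_{[k-1]}$; draw $W^{(0)}_{[k]}$ uniformly among group-$k$ assignments with $n_{tk}$ ones; while $M_k(W^{(t)}_{[k]})>a_k$, swap a uniformly chosen treated and a uniformly chosen control unit of group $k$ to get $W^*_{[k]}$ and move to it with probability $\min\{(M_k(W^{(t)}_{[k]})/M_k(W^*_{[k]}))^\gamma,1\}$ (otherwise retry); output the final $W_{[k]}$ and set $M_{[k]}=M_k(W_{[k]})$. *)

(* Defs.v *)
From HB Require Import structures.
From mathcomp Require Import all_boot all_order all_algebra.
From mathcomp Require Import all_classical all_reals all_analysis.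
Set Implicit Arguments. Unset Strict Implicit. Unset Printing Implicit Defensive.
Import Order.TTheory GRing.Theory Num.Theory.
Import numFieldNormedType.Exports.
Local Open Scope classical_set_scope.
Local Open Scope ring_scope.

Section SeqPSRR.
Variable R : realType.

Definition chi2_kernel (nu : nat) (t : R) : R :=
  (t `^ (nu%:R / 2 - 1)) * expR (- t / 2).

(* CDF of the central chi-square law with nu d.f. (nu = 0: point mass at 0) *)
Definition chi2_cdf (nu : nat) (x : R) : R :=
  if nu == 0%N then ((0:R) <= x)%R%:R
  else fine (\int[lebesgue_measure]_(t in `[0%R, x]) (chi2_kernel nu t)%:E)
     / fine (\int[lebesgue_measure]_(t in `[0%R, +oo[) (chi2_kernel nu t)%:E).

(* CDF of the noncentral chi-square law with p d.f. and noncentrality lam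
   (Poisson mixture of central chi-squares) *)
Definition ncchi2_cdf (p : nat) (lam x : R) : \bar R :=
  (\sum_(j <oo) (expR (- lam / 2) * (lam / 2) ^+ j / (j`!)%:R
                  * chi2_cdf (p + 2 * j) x)%:E)%E.

(* lower alpha-quantile: inf {x | F(x) >= alpha}  (+oo if the set is empty) *)
Definition ncchi2_lower_quantile (p : nat) (lam alpha : R) : \bar R :=
  ereal_inf [set x%:E | x in [set x : R | (alpha%:E <= ncchi2_cdf p lam x)%E]].

Variables (p : nat) (X : nat -> 'rV[R]_p).

Definition cov (m : nat) : 'M[R]_p :=
  let mu := (m%:R)^-1 *: \sum_(i < m) X i in
  ((m.-1)%:R)^-1 *: \sum_(i < m) ((X i - mu)^T *m (X i - mu)).

Definition mahal (s : seq bool) : R :=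
  let m := size s in
  let nt := count id s in
  let mt := (nt%:R)^-1 *: \sum_(i < m | nth false s i) X i in
  let mc := ((m - nt)%:R)^-1 *: \sum_(i < m | ~~ nth false s i) X i in
  nt%:R * (1 - nt%:R / m%:R) * ((mt - mc) *m invmx (cov m) *m (mt - mc)^T) 0 0.

(* s : assignments of all earlier units; states b : assignments of the
   current group (m units); a : acceptance threshold a_k; gamma : tuning. *)

Definition swapb m (b : m.-tuple bool) (i j : 'I_m) : m.-tuple bool :=
  [tuple if k == i then false else if k == j then true else tnth b k | k < m].

Definition Mk (s : seq bool) m (b : m.-tuple bool) : R := mahal (s ++ b).

Definition acc_prob (gamma Mcur Mnew : R) : R :=
  if Mnew == 0 then 1 else Num.min ((Mcur / Mnew) `^ gamma) 1.

Definition stopped (s : seq bool) (a : \bar R) m (b : m.-tuple bool) : bool :=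
  ((Mk s b)%:E <= a)%E.

(* one step: stop (absorb) if M_k <= a_k, else propose a pair switch of a
   uniformly chosen treated and control unit, accepted w.p. min{(M/M')^gamma,1} where M' is the proposal distance *)
Definition trans (s : seq bool) (a : \bar R) (gamma : R) m
    (b b' : m.-tuple bool) : R :=
  if stopped s a b then (b' == b)%:R else
  let np := (count id b * (m - count id b))%:R in
  \sum_(i < m | tnth b i) \sum_(j < m | ~~ tnth b j)
     np^-1 * ((b' == swapb b i j)%:R * acc_prob gamma (Mk s b) (Mk s (swapb b i j))
             + (b' == b)%:R * (1 - acc_prob gamma (Mk s b) (Mk s (swapb b i j)))).

Definition init m (b : m.-tuple bool) : R :=
  (count id b == m./2)%:R /
  (#|[set b' : m.-tuple bool | count id b' == m./2]|)%:R.

Fixpoint law_at (s : seq bool) (a : \bar R) (gamma : R) m (t : nat)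
    : m.-tuple bool -> R :=
  match t with
  | 0 => @init m
  | t'.+1 => fun b' => \sum_(b : m.-tuple bool) law_at s a gamma t' b * trans s a gamma b b'
  end.

Definition output_law (s : seq bool) (a : \bar R) (gamma : R) m
    (b : m.-tuple bool) : R :=
  limn (fun t => (stopped s a b)%:R * law_at s a gamma t b).

(* groups are 0-indexed: group k has size nth 0%N ns k *)
Variables (ns : seq nat) (svec : nat -> R) (gamma : R).

Definition cum (k : nat) : nat := \sum_(l < k) nth 0%N ns l.

(* M_[k-1] computed from the assignment s of the earlier groups *)
Definition Mprev (k : nat) (s : seq bool) : R := if k is 0 then 0 else mahal s.

Definition threshold (k : nat) (s : seq bool) : \bar R :=
  (((nth 0%N ns k)%:R / (cum k.+1)%:R)%:E *
   ncchi2_lower_quantile p ((cum k)%:R / (nth 0%N ns k)%:R * Mprev k s)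
     (svec k)^-1)%E.

Definition group_law (k : nat) (s b : seq bool) : R :=
  match insub b : option ((nth 0%N ns k).-tuple bool) with
  | Some bt => output_law s (threshold k s) gamma bt
  | None => 0
  end.

Definition prefix_prob (k : nat) (w : seq bool) : R :=
  \prod_(l < k) group_law l (take (cum l) w) (take (nth 0%N ns l) (drop (cum l) w)).

End SeqPSRR.

Definition tauhat (R : realType) (Y1 Y0 : nat -> R) (w : seq bool) : R :=
  let n := size w in
  2 / n%:R * \sum_(i < n) (nth false w i)%:R * Y1 i
  - 2 / n%:R * \sum_(i < n) (1 - (nth false w i)%:R) * Y0 i.

Definition tau (R : realType) (Y1 Y0 : nat -> R) (n : nat) : R :=
  (n%:R)^-1 * \sum_(i < n) (Y1 i - Y0 i).

(* Main.v *)
Require Import Defs.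
From HB Require Import structures.
From mathcomp Require Import all_boot all_order all_algebra.
From mathcomp Require Import all_classical all_reals all_analysis.
From mathcomp Require Import ring lra zify.
Import Order.TTheory GRing.Theory Num.Theory.
Import numFieldNormedType.Exports.
Local Open Scope ring_scope.
Set Implicit Arguments. Unset Strict Implicit.

Lemma quadN (R : comRingType) p (D : 'rV[R]_p) (M : 'M[R]_p) :
  (- D) *m M *m (- D)^T = D *m M *m D^T.
Proof. by rewrite linearN /= mulmxN !mulNmx opprK. Qed.

Section S.
Variables (R : realType) (p : nat) (X : nat -> 'rV[R]_p).

Lemma count_neg (s : seq bool) : count id (map negb s) = (size s - count id s)%N.
Proof. by rewrite count_map -(count_predC id s) addKn. Qed.

Lemma mahal_neg s : mahal X (map negb s) = mahal X s.
Proof.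
rewrite /mahal size_map count_neg.
set m := size s; set nt := count id s.
have ntm : (nt <= m)%N by rewrite count_size.
have E1 : \sum_(i < m | nth false (map negb s) i) X i = \sum_(i < m | ~~ nth false s i) X i.
  by apply: eq_bigl => i; rewrite (nth_map false).
have E2 : \sum_(i < m | ~~ nth false (map negb s) i) X i = \sum_(i < m | nth false s i) X i.
  by apply: eq_bigl => i; rewrite (nth_map false) // negbK.
rewrite E1 E2 subKn //.
set A := (_ *: \sum_(i < m | ~~ _) X i); set B := (_ *: \sum_(i < m | nth _ _ _) X i).
have -> : A - B = - (B - A) by rewrite opprB.
rewrite quadN.

congr (_ * _).
have [m0|mn0] := eqVneq m 0%N.
  have nt0 : nt = 0%N by apply/eqP; rewrite -leqn0 -m0.
  by rewrite m0 nt0 sub0n !mul0r.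
rewrite natrB //; field; by rewrite pnatr_eq0.
Qed.
End S.

Section Chain.
Variables (R : realType) (p : nat) (X : nat -> 'rV[R]_p).

Definition negt m (b : m.-tuple bool) : m.-tuple bool := map_tuple negb b.

Lemma negtK m : involutive (@negt m).
Proof. by move=> b; apply: eq_from_tnth => k; rewrite !tnth_map negbK. Qed.

Lemma negt_inj m : injective (@negt m).
Proof. exact: inv_inj (@negtK m). Qed.

Lemma Mk_neg s m (b : m.-tuple bool) : Mk X (map negb s) (negt b) = Mk X s b.
Proof. by rewrite /Mk /= -map_cat mahal_neg. Qed.

Lemma stopped_neg s a m (b : m.-tuple bool) :
  stopped X (map negb s) a (negt b) = stopped X s a b.
Proof. by rewrite /stopped Mk_neg. Qed.

Lemma swapb_neg m (b : m.-tuple bool) (i j : 'I_m) :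
  ~~ tnth b i -> tnth b j -> swapb (negt b) i j = negt (swapb b j i).
Proof.
move=> hi hj; apply: eq_from_tnth => k; rewrite !tnth_map !tnth_ord_tuple.
have [ki|ki] := eqVneq k i.
  subst k; have [ij|//] := eqVneq i j; by rewrite ij hj in hi.
have [kj|kj] := eqVneq k j; first by subst k.
by [].
Qed.

Lemma count_negt m (b : m.-tuple bool) : count id (negt b) = (m - count id b)%N.
Proof. by rewrite count_neg size_tuple. Qed.

End Chain.

Section Chain2.
Variables (R : realType) (p : nat) (X : nat -> 'rV[R]_p).
Lemma negt_eq m (x y : m.-tuple bool) : (negt x == negt y) = (x == y).
Proof. exact: (inj_eq (@negt_inj m)). Qed.
Lemma trans_neg s a g m (c b' : m.-tuple bool) :
  trans X (map negb s) a g (negt c) (negt b') = trans X s a g c b'.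
Proof.
rewrite /trans stopped_neg.
rewrite !(negt_eq b' c).
case: (stopped X s a c); first by [].
rewrite count_negt.
have cm : (count id c <= m)%N by rewrite -{2}(size_tuple c) count_size.
rewrite (subKn cm) mulnC.
rewrite [LHS](@exchange_big _ _ _ _ _ (index_enum 'I_m) (index_enum 'I_m)).
have tn : forall k, tnth (negt c) k = ~~ tnth c k by move=> k; rewrite /negt tnth_map.
apply: eq_big => [j|j hj]; first by rewrite tn negbK.
apply: eq_big => [i|i hi]; first by rewrite tn.
rewrite tn negbK in hj; rewrite tn in hi.
rewrite (swapb_neg hi hj) !Mk_neg negt_eq.
by [].
Qed.
Lemma init_neg m (b : m.-tuple bool) : ~~ odd m -> init R (negt b) = init R b.
Proof.
move=> ev; rewrite /init count_negt.
have cm : (count id b <= m)%N by rewrite -{2}(size_tuple b) count_size.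
have hm := odd_double_half m; rewrite (negbTE ev) add0n -addnn in hm.
have -> : ((m - count id b)%N == m./2) = (count id b == m./2).
  by apply/eqP/eqP => h; lia.
by [].
Qed.

Lemma law_atS s a g m t (b : m.-tuple bool) :
  law_at X s a g t.+1 b = \sum_(c : m.-tuple bool) law_at X s a g t c * trans X s a g c b.
Proof. by []. Qed.

Lemma law_at_neg s a g m t (b : m.-tuple bool) : ~~ odd m ->
  law_at X (map negb s) a g t (negt b) = law_at X s a g t b.
Proof.
move=> ev; elim: t b => [|t IH] b; first exact: init_neg.
rewrite !law_atS [LHS](reindex_inj (@negt_inj m)).
by apply: eq_bigr => c _; rewrite IH trans_neg.
Qed.

Lemma output_law_neg s a g m (b : m.-tuple bool) : ~~ odd m ->
  output_law X (map negb s) a g (negt b) = output_law X s a g b.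
Proof.
move=> ev; rewrite /output_law.
suff -> : (fun t => (stopped X (map negb s) a (negt b))%:R * law_at X (map negb s) a g t (negt b))
  = (fun t => (stopped X s a b)%:R * law_at X s a g t b) by [].
by apply: funext => t; rewrite stopped_neg law_at_neg.
Qed.
End Chain2.

Section Tup.
Variable R : realType.

Lemma sum_tuple_eq m m' (e : m = m') (f : seq bool -> R) :
  \sum_(w : m.-tuple bool) f w = \sum_(w : m'.-tuple bool) f w.
Proof. by case: m' / e. Qed.

Lemma sum_tuple_cat a b (f : seq bool -> R) :
  \sum_(w : (a + b).-tuple bool) f w =
  \sum_(s : a.-tuple bool) \sum_(t : b.-tuple bool) f (s ++ t).
Proof.
rewrite pair_big /=.
pose h := fun pr : a.-tuple bool * b.-tuple bool => cat_tuple pr.1 pr.2.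
rewrite (reindex h) /=.
  by apply: eq_big => [pr|pr _] //.
pose g := fun w : (a + b).-tuple bool =>
  (insubd (nseq_tuple a false) (take a w), insubd (nseq_tuple b false) (drop a w)).
exists g => [pr _|w _].
  case: pr => s t; rewrite /g /h /=; congr (_, _); apply: val_inj.
    rewrite insubdK /= take_size_cat ?size_tuple //.
    by rewrite -topredE /= size_tuple.
  rewrite insubdK /= drop_size_cat ?size_tuple //.
  by rewrite -topredE /= size_tuple.
apply: val_inj; rewrite /h /g /= !insubdK ?cat_take_drop //.
  by rewrite -topredE /= size_drop size_tuple addKn.
by rewrite -topredE /= size_takel // size_tuple leq_addr.
Qed.

Lemma sum_tuple0 (f : seq bool -> R) : \sum_(w : 0.-tuple bool) f w = f [::].
Proof.
rewrite (big_pred1 [tuple]) //.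
by move=> w /=; apply/esym/eqP; apply: val_inj; rewrite /= (size0nil (size_tuple w)).
Qed.
End Tup.

Lemma limn_ge0 (R : realType) (u : nat -> R) : (forall n, 0 <= u n) -> 0 <= limn u.
Proof.
move=> h; have [c|nc] := pselect (cvgn u).
  by apply: limr_ge => //; apply: nearW.
by rewrite dvgP.
Qed.

Section Nonneg.
Variables (R : realType) (p : nat) (X : nat -> 'rV[R]_p).

Lemma acc_prob_01 (g x y : R) : 0 <= acc_prob g x y <= 1.
Proof.
rewrite /acc_prob; case: ifP => _; first by rewrite ler01 lexx.
by rewrite le_min ge_min lexx orbT powR_ge0 ler01.
Qed.

Lemma trans_ge0 s a g m (c b : m.-tuple bool) : 0 <= trans X s a g c b.
Proof.
rewrite /trans; case: (stopped X s a c); first by rewrite ler0n.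
apply: sumr_ge0 => i _; apply: sumr_ge0 => j _.
have /andP[h0 h1] := acc_prob_01 g (Mk X s c) (Mk X s (swapb c i j)).
apply: mulr_ge0; first by rewrite invr_ge0 ler0n.
apply: addr_ge0; apply: mulr_ge0; rewrite ?ler0n //.
by rewrite subr_ge0.
Qed.

Lemma init_ge0 m (b : m.-tuple bool) : 0 <= init R b.
Proof. by rewrite /init divr_ge0 ?ler0n. Qed.

Lemma law_at_ge0 s a g m t (b : m.-tuple bool) : 0 <= law_at X s a g t b.
Proof.
elim: t b => [|t IH] b; first exact: init_ge0.
rewrite law_atS; apply: sumr_ge0 => c _; apply: mulr_ge0; first exact: IH.
exact: trans_ge0.
Qed.

Lemma output_law_ge0 s a g m (b : m.-tuple bool) : 0 <= output_law X s a g b.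
Proof.
apply: limn_ge0 => t; apply: mulr_ge0; first by rewrite ler0n.
exact: law_at_ge0.
Qed.
End Nonneg.

Section Main.
Variables (R : realType) (p : nat) (X : nat -> 'rV[R]_p).
Variables (ns : seq nat) (sv : nat -> R) (g : R).

Lemma threshold_neg k s : threshold X ns sv k (map negb s) = threshold X ns sv k s.
Proof. rewrite /threshold /Mprev; case: k => [|k]; first by []. by rewrite mahal_neg. Qed.

Lemma group_law_ge0 k s b : 0 <= group_law X ns sv g k s b.
Proof.
rewrite /group_law; case: (insubP _ b) => [bt _ _|_]; last by [].
exact: output_law_ge0.
Qed.

Lemma prefix_prob_ge0 k w : 0 <= prefix_prob X ns sv g k w.
Proof. by apply: prodr_ge0 => l _; exact: group_law_ge0. Qed.

Lemma group_law_neg k s b : ~~ odd (nth 0%N ns k) ->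
  group_law X ns sv g k (map negb s) (map negb b) = group_law X ns sv g k s b.
Proof.
move=> ev; rewrite /group_law threshold_neg.
case: (insubP _ b) => [bt hb eb|hb]; case: (insubP _ (map negb b)) => [bt' hb' eb'|hb'].
- have -> : bt' = negt bt by apply: val_inj; rewrite eb' /negt /= eb.
  exact: output_law_neg.
- by rewrite size_map hb in hb'.
- by rewrite size_map in hb'; rewrite hb' in hb.
- by [].
Qed.

Lemma prefix_prob_neg k w : (forall l, ~~ odd (nth 0%N ns l)) ->
  prefix_prob X ns sv g k (map negb w) = prefix_prob X ns sv g k w.
Proof.
move=> ev; rewrite /prefix_prob; apply: eq_bigr => l _.
by rewrite -map_take -map_drop -map_take group_law_neg.
Qed.
End Main.

Lemma cumS (ns : seq nat) k : cum ns k.+1 = (cum ns k + nth 0%N ns k)%N.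
Proof. by rewrite /cum big_ord_recr. Qed.

Lemma cum_mono (ns : seq nat) i j : (i <= j)%N -> (cum ns i <= cum ns j)%N.
Proof.
elim: j => [|j IH]; first by rewrite leqn0 => /eqP ->.
rewrite leq_eqVlt => /orP[/eqP -> //|]; rewrite ltnS => /IH h.
by rewrite cumS (leq_trans h) ?leq_addr.
Qed.

Section Main2.
Variables (R : realType) (p : nat) (X : nat -> 'rV[R]_p).
Variables (ns : seq nat) (sv : nat -> R) (g : R).

Lemma prefix_prob_cat k (s t : seq bool) : size s = cum ns k ->
  prefix_prob X ns sv g k.+1 (s ++ t) =
  prefix_prob X ns sv g k s * group_law X ns sv g k s (take (nth 0%N ns k) t).
Proof.
move=> hs; rewrite /prefix_prob. rewrite big_ord_recr; apply: (f_equal2 (@GRing.mul R)).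
  apply: eq_bigr => l _.
  have hl : (cum ns l.+1 <= cum ns k)%N by apply: cum_mono; exact: ltn_ord.
  have hl' : (cum ns l <= size s)%N by rewrite hs (leq_trans _ hl) // cumS leq_addr.
  rewrite (takel_cat _ hl') drop_cat.
  case: ltnP => hlt.
    have hsz : (nth 0%N ns l <= size (drop (cum ns l) s))%N.
      by rewrite size_drop hs leq_subRL; [rewrite -cumS | rewrite -hs].
    by rewrite (takel_cat _ hsz).
  have e : cum ns l = size s by apply/eqP; rewrite eqn_leq hl' hlt.
  have e2 : nth 0%N ns l = 0%N.
    by move: hl; rewrite cumS -hs -e => hh; lia.
  by rewrite e2 !take0.
rewrite (take_size_cat _ hs) (drop_size_cat _ hs).
by [].
Qed.
Lemma mass k :
  (forall k, (k < size ns)%N ->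
     forall s : (cum ns k).-tuple bool,
       0 < prefix_prob X ns sv g k s ->
       \sum_(b : (nth 0%N ns k).-tuple bool)
          output_law X s (threshold X ns sv k s) g b = 1) ->
  (k <= size ns)%N ->
  \sum_(w : (cum ns k).-tuple bool) prefix_prob X ns sv g k w = 1.
Proof.
move=> H; elim: k => [_|k IH hk].
  have e0 : cum ns 0 = 0%N by rewrite /cum big_ord0.
  rewrite (sum_tuple_eq e0 (fun w => prefix_prob X ns sv g 0 w)) sum_tuple0.
  by rewrite /prefix_prob big_ord0.
rewrite (sum_tuple_eq (cumS ns k) (fun w => prefix_prob X ns sv g k.+1 w)) sum_tuple_cat.
rewrite -[RHS](IH (ltnW hk)).
apply: eq_bigr => s _.
transitivity (\sum_(t : (nth 0%N ns k).-tuple bool)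
   prefix_prob X ns sv g k s * output_law X s (threshold X ns sv k s) g t).
  apply: eq_bigr => t _.
  rewrite (prefix_prob_cat _ (size_tuple s)).
  have -> : take (nth 0%N ns k) t = t by rewrite -{1}(size_tuple t) take_size.
  by rewrite /group_law (valK t).
rewrite -mulr_sumr.
have := prefix_prob_ge0 X ns sv g k s; rewrite le_eqVlt => /orP[/eqP <-|hp].
  by rewrite mul0r.
by rewrite (H k hk s hp) mulr1.
Qed.
End Main2.

Lemma tauhat_neg (R : realType) (Y1 Y0 : nat -> R) (w : seq bool) :
  tauhat Y1 Y0 w + tauhat Y1 Y0 (map negb w) = 2 * tau Y1 Y0 (size w).
Proof.
rewrite /tauhat /tau size_map.
set n := size w.
have e1 : \sum_(i < n) (nth false (map negb w) i)%:R * Y1 i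
        = \sum_(i < n) (1 - (nth false w i)%:R) * Y1 i.
  by apply: eq_bigr => i _; rewrite (nth_map false) //; case: (nth false w i); rewrite ?subr0 ?subrr.
have e2 : \sum_(i < n) (1 - (nth false (map negb w) i)%:R) * Y0 i
        = \sum_(i < n) (nth false w i)%:R * Y0 i.
  by apply: eq_bigr => i _; rewrite (nth_map false) //; case: (nth false w i); rewrite ?subr0 ?subrr.
rewrite e1 e2.
have hA : \sum_(i < n) (nth false w i)%:R * Y1 i + \sum_(i < n) (1 - (nth false w i)%:R) * Y1 i
        = \sum_(i < n) Y1 i.
  by rewrite -big_split; apply: eq_bigr => i _ /=; ring.
have hB : \sum_(i < n) (1 - (nth false w i)%:R) * Y0 i + \sum_(i < n) (nth false w i)%:R * Y0 i
        = \sum_(i < n) Y0 i.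
  by rewrite -big_split; apply: eq_bigr => i _ /=; ring.
rewrite sumrB -hA -hB.
ring.
Qed.

Theorem theorem4 (R : realType) (p : nat) (X : nat -> 'rV[R]_p)
  (ns : seq nat) (svec : nat -> R) (gamma : R) (Y1 Y0 : nat -> R) :
  (forall k, (k < size ns)%N -> (0 < nth 0%N ns k)%N /\ ~~ odd (nth 0%N ns k)) ->
  (forall k, (k < size ns)%N -> cov X (cum ns k.+1) \in unitmx) ->
  (forall k, (k < size ns)%N -> 0 < svec k) ->
  0 <= gamma ->
  (* SeqPSRR terminates almost surely in every group *)
  (forall k, (k < size ns)%N ->
     forall s : (cum ns k).-tuple bool,
       0 < prefix_prob X ns svec gamma k s ->
       \sum_(b : (nth 0%N ns k).-tuple bool)
          output_law X s (threshold X ns svec k s) gamma b = 1) ->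
  \sum_(w : (cum ns (size ns)).-tuple bool)
     prefix_prob X ns svec gamma (size ns) w * tauhat Y1 Y0 w
  = tau Y1 Y0 (cum ns (size ns)).
Proof.
move=> hev _ _ _ hterm.
have ev : forall l, ~~ odd (nth 0%N ns l).
  move=> l; have [hl|hl] := ltnP l (size ns); first by case: (hev l hl).
  by rewrite nth_default.
have tot := mass hterm (leqnn (size ns)).
set S := (X in X = _).
have sym : S = \sum_(w : (cum ns (size ns)).-tuple bool)
     prefix_prob X ns svec gamma (size ns) w * tauhat Y1 Y0 (map negb w).
  rewrite /S [LHS](reindex_inj (@negt_inj _)).
  apply: eq_bigr => w _.
  have -> : tval (negt w) = map negb w by [].
  by rewrite prefix_prob_neg.
have h2 : S + S = 2 * tau Y1 Y0 (cum ns (size ns)).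
  rewrite {2}sym -big_split.
  transitivity (\sum_(w : (cum ns (size ns)).-tuple bool)
     prefix_prob X ns svec gamma (size ns) w * (2 * tau Y1 Y0 (cum ns (size ns)))).
    apply: eq_bigr => w _.
    by rewrite /= -mulrDr tauhat_neg size_tuple.
  by rewrite -mulr_suml tot mul1r.
lra.
Qed.
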